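(* Let $A$ be a uniformly random $k\times n$ binary matrix, $\mathbf{s}$ a uniformly random $k$-bit binary vector, and $\mathbf{z}=f(\mathbf{s}A)+\mathbf{v}$ where the bits of $\mathbf{v}\in\{0,1\}^D$ are i.i.d. Bernoulli. Let $\mathbf{c}$ be a uniformly random $n$-bit vector chosen independently of everything else. For $i\in\{1,\dots,k\}$, let $A'$ be the matrix obtained from $A$ by replacing its $i$-th row $(A)_i$ with $(A)_i+\mathbf{c}$, and let $hyb_i$ denote the distribution of the bitstring $\langle A',\mathbf{z}\rangle$. If $s_i=1$, then $hyb_i$ is the uniform distribution on $\{0,1\}^{kn+D}$.
   Context: All arithmetic is over $GF(2)$; $+$ denotes XOR. The function $f:\{0,1\}^n\to\{0,1\}^D$: given positive integers $n,p$ with $D=n-p$ and a Boolean function $g:\{0,1\}^p\to\{0,1\}$ whose algebraic normal form contains only non-linear terms (every monomial has degree at least two), $f(\mathbf{x})=\mathbf{y}$ has bits $y_i=x_i+g(x_{i+1},\dots,x_{i+p})$ for $1\le i\le D$. Such $f$ maps the uniform distribution on $\{0,1\}^n$ to the uniform distribution on $\{0,1\}^D$. *)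

(* Defs.v *)
From HB Require Import structures.
From mathcomp Require Import all_boot all_order all_algebra.
Set Implicit Arguments. Unset Strict Implicit. Unset Printing Implicit Defensive.
Import Order.TTheory GRing.Theory Num.Theory.
Local Open Scope ring_scope.

Notation F2 := ('F_2 : finFieldType).

(* bit m of a row vector (0-based), 0 if out of range *)
Definition bit n (x : 'rV[F2]_n) (m : nat) : F2 :=
  if insub m is Some j then x 0 j else 0.

Definition anf_nonlinear p (g : 'rV[F2]_p -> F2) : Prop :=
  exists a : {set 'I_p} -> F2,
    (forall S : {set 'I_p}, (#|S| < 2)%N -> a S = 0) /\
    (forall x, g x = \sum_(S : {set 'I_p}) a S * \prod_(j in S) x 0 j).

(* f(x)_j = x_j + g(x_{j+1},...,x_{j+p}), for 0 <= j < D = n - p (0-based) *)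
Definition fmap n p (g : 'rV[F2]_p -> F2) (x : 'rV[F2]_n) : 'rV[F2]_(n - p) :=
  \row_(j < n - p) (bit x j + g (\row_(t < p) bit x (j + 1 + t)%N)).

(* the experiment: outcome (A, s, c, v) *)
Definition outcome k n D := ('M[F2]_(k, n) * 'rV[F2]_k * 'rV[F2]_n * 'rV[F2]_D)%type.

Definition bern (R : realFieldType) (eta : R) (b : F2) : R :=
  if b == 1 then eta else 1 - eta.

Definition weight (R : realFieldType) (eta : R) k n D (w : outcome k n D) : R :=
  let: (A, s, c, v) := w in
  (2 ^+ (k * n))^-1 * (2 ^+ k)^-1 * (2 ^+ n)^-1 * \prod_(j < D) bern eta (v 0 j).

Definition Pr (R : realFieldType) (eta : R) k n D (E : pred (outcome k n D)) : R :=
  \sum_(w : outcome k n D | E w) weight eta w.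

Definition Aprime k n (i : 'I_k) (A : 'M[F2]_(k, n)) (c : 'rV[F2]_n) : 'M[F2]_(k, n) :=
  \matrix_(r < k, j < n) (A r j + (r == i)%:R * c 0 j).

Definition zval k n p (g : 'rV[F2]_p -> F2) (A : 'M[F2]_(k, n)) (s : 'rV[F2]_k)
  (v : 'rV[F2]_(n - p)) : 'rV[F2]_(n - p) := fmap g (s *m A) + v.

(* hyb_i conditioned on s_i = 1: probability that <A', z> = <M, y> *)
Definition hyb_cond (R : realFieldType) (eta : R) k n p (g : 'rV[F2]_p -> F2)
  (i : 'I_k) (M : 'M[F2]_(k, n)) (y : 'rV[F2]_(n - p)) : R :=
  Pr eta (fun w : outcome k n (n - p) => let: (A, s, c, v) := w in
            [&& Aprime i A c == M, zval g A s v == y & s 0 i == 1])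
  / Pr eta (fun w : outcome k n (n - p) => let: (A, s, c, v) := w in s 0 i == 1).

(* Main.v *)
Require Import Defs.
From mathcomp Require Import all_boot all_order all_algebra.
From mathcomp Require Import zify ring.
Import Order.TTheory GRing.Theory Num.Theory.
Local Open Scope ring_scope.

Lemma F2xx (x : F2) : x + x = 0.
Proof. by apply/eqP; case: x => -[|[|]]. Qed.

Lemma bitE n (x : 'rV[F2]_n) (j : 'I_n) : bit x j = x 0 j.
Proof. by rewrite /bit valK. Qed.

Lemma bit_out n (x : 'rV[F2]_n) m : (n <= m)%N -> bit x m = 0.
Proof. by move=> h; rewrite /bit insubF // ltnNge h. Qed.

Definition phi n p (g : 'rV[F2]_p -> F2) (x : 'rV[F2]_n) :=
  (fmap g x, \row_(t < p) bit x (n - p + t)%N).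

Lemma phi_inj n p g : (p <= n)%N -> injective (@phi n p g).
Proof.
move=> pn x x' [] /rowP hf /rowP ht.
have key : forall d m, (n - d <= m)%N -> bit x m = bit x' m.
  elim=> [|d IH] m hm.
    by rewrite subn0 in hm; rewrite !bit_out.
  case: (leqP (n - d) m) => hm2; first exact: IH.
  have em : m = (n - d.+1)%N by move: hm hm2; lia.
  have mn : (m < n)%N by move: hm2; lia.
  case: (leqP (n - p) m) => hD.
    have tp : (m - (n - p) < p)%N by move: mn hD; lia.
    have := ht (Ordinal tp); rewrite !mxE /=.
    by rewrite subnKC.
  have := hf (Ordinal hD); rewrite !mxE /=.
  have -> : \row_(t < p) bit x (m + 1 + t) = \row_(t < p) bit x' (m + 1 + t).
    by apply/rowP => t; rewrite !mxE; apply: IH; move: hm2; lia.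
  by move/(congr1 (fun a => a + g (\row_(t < p) bit x' (m + 1 + t)))); rewrite -!addrA F2xx !addr0.

apply/rowP => j; rewrite -!bitE; apply: (key n); lia.
Qed.

Lemma card_F2 : #|F2| = 2%N.
Proof. by rewrite card_Fp. Qed.

Lemma card_rV m : #|{: 'rV[F2]_m}| = (2 ^ m)%N.
Proof. by rewrite card_mx card_F2 mul1n. Qed.

Lemma fmap_count (R : realFieldType) n p (g : 'rV[F2]_p -> F2) (z : 'rV[F2]_(n - p)) :
  (p <= n)%N -> \sum_(x : 'rV[F2]_n) ((fmap g x == z)%:R : R) = (2 ^ p)%:R.
Proof.
move=> pn.
have bij : bijective (@phi n p g).
  apply: inj_card_bij; first exact: phi_inj.
  by rewrite card_prod !card_rV -expnD subnK.
case: bij => h hK Kh.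
rewrite (reindex h); last by exists (@phi n p g) => q _; rewrite ?hK ?Kh.
under eq_bigr => q _ do rewrite -[fmap g (h q)]/((@phi n p g (h q)).1) Kh.
rewrite -(pair_bigA _ (fun a b => ((a == z)%:R : R))) /= (bigD1 z) //= [X in _ + X]big1 ?addr0; last first.
  by move=> a naz; rewrite (negbTE naz); by rewrite big1.
by rewrite eqxx sumr_const card_rV.
Qed.


Section S.
Variables (R : realFieldType) (eta : R) (k n D : nat).
Definition Cst : R := (2 ^+ (k * n))^-1 * (2 ^+ k)^-1 * (2 ^+ n)^-1.
Definition Bv (v : 'rV[F2]_D) : R := \prod_(j < D) bern eta (v 0 j).

Lemma PrE (E : pred (outcome k n D)) :
  Pr eta E = Cst * \sum_(A : 'M[F2]_(k, n)) \sum_(s : 'rV[F2]_k) \sum_(c : 'rV[F2]_n)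
     \sum_(v : 'rV[F2]_D) ((E (A, s, c, v))%:R * Bv v).
Proof.
rewrite /Pr big_mkcond /=.
rewrite (pair_bigA _ (fun A s => \sum_(c : 'rV[F2]_n) \sum_(v : 'rV[F2]_D) ((E (A, s, c, v))%:R * Bv v))) /=.
rewrite (pair_bigA _ (fun As c => \sum_(v : 'rV[F2]_D) ((E (As.1, As.2, c, v))%:R * Bv v))) /=.
rewrite (pair_bigA _ (fun Asc v => ((E (Asc.1.1, Asc.1.2, Asc.2, v))%:R * Bv v))) /=.
rewrite big_distrr /=.
apply: eq_bigr => -[[[A s] c] v] _ /=.
by case: (E _); rewrite /= ?mul1r ?mul0r ?mulr0 /Cst /Bv.
Qed.

Lemma Bsum : \sum_v Bv v = 1.
Proof.
rewrite /Bv.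
rewrite (reindex (fun f : {ffun 'I_D -> F2} => \row_j f j)); last first.
  exists (fun v : 'rV[F2]_D => [ffun j => v 0 j]) => x _.
    by apply/ffunP => j; rewrite ffunE mxE.
  by apply/rowP => j; rewrite !mxE ffunE.
under eq_bigr => f _ do under eq_bigr => j _ do rewrite mxE.
rewrite -(bigA_distr_bigA (fun (j : 'I_D) (b : F2) => bern eta b)) /=.
apply: big1 => j _.
rewrite (bigD1 0) //= (bigD1 1) //= big1 ?addr0 /bern /=; rewrite ?eqxx /=; first by rewrite subrK.
by move=> b; case: b => -[|[|]].
Qed.
End S.


Lemma sAprime k n (i : 'I_k) (M : 'M[F2]_(k, n)) c (s : 'rV[F2]_k) :
  s 0 i = 1 -> s *m Aprime i M c = s *m M + c.
Proof.
move=> si; apply/rowP => j; rewrite !mxE.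
under eq_bigr => r _ do rewrite mxE mulrDr.
rewrite big_split /= [X in _ + X](bigD1 i) //= [X in _ + (_ + X)]big1 ?addr0.
  by rewrite eqxx si !mul1r.
by move=> r /negbTE ->; rewrite mul0r mulr0.
Qed.

Lemma AprimeE k n (i : 'I_k) (A M : 'M[F2]_(k, n)) c :
  (Aprime i A c == M) = (A == Aprime i M c).
Proof.
apply/eqP/eqP => [<-|->]; apply/matrixP => r j; rewrite !mxE -addrA F2xx addr0 //.
Qed.

Lemma reorg (R : realFieldType) (I J K L : finType) (F : I -> J -> K -> L -> R) :
  \sum_a \sum_b \sum_c \sum_d F a b c d = \sum_b \sum_d \sum_a \sum_c F a b c d.
Proof.
rewrite exchange_big; apply: eq_bigr => b _.
under eq_bigr => a _ do rewrite exchange_big.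
by rewrite exchange_big.
Qed.

Lemma collect (R : realFieldType) (eta : R) D (S : finType) (a : S -> R) (K : R) :
  \sum_s \sum_(v : 'rV[F2]_D) (a s * (@Bv R eta D v * K)) = (\sum_s a s) * K.
Proof.
under eq_bigr => s _ do rewrite -big_distrr /= -big_distrl /= Bsum mul1r.
by rewrite -big_distrl.
Qed.


Lemma eqaddsub m (a b c : 'rV[F2]_m) : (a + b == c) = (a == c - b).
Proof. by apply/idP/idP => /eqP H; apply/eqP; [rewrite -H addrK | rewrite H subrK]. Qed.

Theorem lemma1 (R : realFieldType) (eta : R) (k n p : nat)
  (g : 'rV[F2]_p -> F2) (i : 'I_k) :
  (0 < p)%N -> (p <= n)%N -> 0 <= eta -> eta <= 1 ->
  anf_nonlinear g ->
  forall (M : 'M[F2]_(k, n)) (y : 'rV[F2]_(n - p)),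
    hyb_cond eta g i M y = (2 ^+ (k * n + (n - p)))^-1.
Proof.
move=> p0 pn _ _ _ M y.
rewrite /hyb_cond PrE [X in _ / X]PrE.
set a := fun s : 'rV[F2]_k => ((s 0 i == 1)%:R : R).
have num : forall (s : 'rV[F2]_k) (v : 'rV[F2]_(n - p)),
  \sum_(A : 'M[F2]_(k, n)) \sum_(c : 'rV[F2]_n)
    (([&& Aprime i A c == M, zval g A s v == y & s 0 i == 1])%:R * @Bv R eta (n - p) v)
  = a s * (@Bv R eta (n - p) v * (2 ^ p)%N%:R).
  move=> s v; rewrite /a; case: (s 0 i =P 1) => si; last first.
    by rewrite mul0r; apply: big1 => A _; apply: big1 => c _; rewrite !andbF mul0r.
  rewrite mul1r exchange_big /=.
  transitivity (\sum_c (@Bv R eta (n - p) v * ((fmap g (s *m M + c) + v == y)%:R))).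
    apply: eq_bigr => c _.
    rewrite (bigD1 (Aprime i M c)) //= AprimeE eqxx andbT /zval sAprime // big1 ?addr0 1?mulrC //.
    by move=> A; rewrite AprimeE => /negbTE ->; rewrite mul0r.
  rewrite -big_distrr /=; congr (_ * _).
  rewrite -(fmap_count R n p g (y - v) pn) [RHS](reindex_inj (addrI (s *m M))) /=.
  apply: eq_bigr => x _; congr (_%:R).
  by rewrite eqaddsub.
have den : forall (s : 'rV[F2]_k) (v : 'rV[F2]_(n - p)),
  \sum_(A : 'M[F2]_(k, n)) \sum_(c : 'rV[F2]_n)
    ((s 0 i == 1)%:R * @Bv R eta (n - p) v)
  = a s * (@Bv R eta (n - p) v * (2 ^ (k * n) * 2 ^ n)%N%:R).
  move=> s v; rewrite /a.
  under eq_bigr => A _ do rewrite sumr_const (card_rV n).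
  rewrite sumr_const (card_mx F2 k n) card_F2.
  by rewrite -mulrnA mulnC mulr_natr mulrnAr.
rewrite (reorg R _ _ _ _ (fun (A : 'M[F2]_(k, n)) (s : 'rV[F2]_k) (c : 'rV[F2]_n) (v : 'rV[F2]_(n - p)) =>
   ([&& Aprime i A c == M, zval g A s v == y & s 0 i == 1])%:R * @Bv R eta (n - p) v)).
rewrite (reorg R _ _ _ _ (fun (A : 'M[F2]_(k, n)) (s : 'rV[F2]_k) (c : 'rV[F2]_n) (v : 'rV[F2]_(n - p)) => (s 0 i == 1)%:R * @Bv R eta (n - p) v)).
rewrite (eq_bigr (fun s => \sum_v a s * (@Bv R eta (n - p) v * (2 ^ p)%N%:R))); last first.
  by move=> s _; apply: eq_bigr => v _; rewrite num.
rewrite [X in _ / (_ * X)](eq_bigr (fun s => \sum_v a s * (@Bv R eta (n - p) v * (2 ^ (k * n) * 2 ^ n)%N%:R))); last first.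
  by move=> s _; apply: eq_bigr => v _; rewrite den.
rewrite !collect.
have Ss : \sum_s a s != 0.
  rewrite /a -natr_sum pnatr_eq0 -lt0n (bigD1 (delta_mx 0 i)) //= mxE !eqxx.
  by rewrite addn_gt0.
have -> : (2 ^ (k * n) * 2 ^ n = 2 ^ (k * n + (n - p)) * 2 ^ p)%N.
  by rewrite -!expnD -addnA subnK.
rewrite !natrM !natrX /Cst.
have two : (2%:R : R) != 0 by rewrite pnatr_eq0.
field.
by rewrite Ss !expf_neq0.
Qed.
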